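(* Let $a,b,h\in\mathbb{R}$ with $h>0$ and $\frac{b-a}{h}\in\mathbb{N}\setminus\{1\}$, let $\gamma,A\ge0$ and $\mu=\frac{4}{h^2}\sin^2\big(\frac{\pi h}{4(b-a)}\big)$. Then the problem $$-D_h^+D_h^-v(x)=\mu v(x)-A\ \ (x\in(a,b)_h),\qquad v(a)=\gamma,\ v(b)=0,$$ has the unique solution $$v(x)=\Big(\gamma-\frac{A}{\mu}\Big)\cos\Big(\frac{\pi(x-a)}{2(b-a)}\Big)-\frac{A}{\mu}\sin\Big(\frac{\pi(x-a)}{2(b-a)}\Big)+\frac{A}{\mu},\quad x\in[a,b]_h,$$ and it satisfies $-D_h^+v(a)\le\big(\gamma+(b-a)^2A\big)\frac{\pi}{2(b-a)}$.
   Context: $[a,b]_h=[a,b]\cap(a+h\mathbb{Z})$, $(a,b)_h=(a,b)\cap(a+h\mathbb{Z})$. $D_h^+v(x)=\frac{v(x+h)-v(x)}{h}$, $D_h^-v(x)=\frac{v(x)-v(x-h)}{h}$. *)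

(* Defs.v *)
From Stdlib Require Import Reals Lra.
Open Scope R_scope.

Definition Dhp (h : R) (v : R -> R) (x : R) : R := (v (x + h) - v x) / h.
Definition Dhm (h : R) (v : R -> R) (x : R) : R := (v x - v (x - h)) / h.

Definition in_closed_grid (a b h x : R) : Prop :=
  a <= x <= b /\ exists k : Z, x = a + IZR k * h.
Definition in_open_grid (a b h x : R) : Prop :=
  a < x < b /\ exists k : Z, x = a + IZR k * h.

Definition solves_problem (a b h mu A gamma : R) (v : R -> R) : Prop :=
  (forall x, in_open_grid a b h x -> - Dhp h (Dhm h v) x = mu * v x - A) /\
  v a = gamma /\ v b = 0.

(* Main.v *)
Require Import Defs.
From Stdlib Require Import Reals Lra Lia ZArith.
Open Scope R_scope.

Lemma sinb a : 0 <= a -> a <= 1 -> a - a^3/6 <= sin a <= a.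
intros H0 H1. assert (Hp: 1 <= PI) by (generalize PI2_3_2; lra).
destruct (sin_bound a 0 H0 ltac:(lra)) as [L U].
unfold sin_approx, sin_term in L, U. simpl sum_f_R0 in L, U.
assert (h3 : 0 <= a*(a*(a*1))) by (repeat apply Rmult_le_pos; lra).
assert (h5 : a * (a * (a * (a * (a * 1)))) <= a*(a*(a*1))).
{ replace (a * (a * (a * (a * (a * 1))))) with (a*(a*(a*1)) * (a*a)) by ring.
  rewrite <- (Rmult_1_r (a*(a*(a*1)))) at 2. apply Rmult_le_compat_l; nra. }
split. simpl pow; lra. lra.
Qed.

Theorem mainTheorem11 (a b h gamma A : R) (N : nat) :
  0 < h -> (b - a) / h = INR N -> (2 <= N)%nat ->
  0 <= gamma -> 0 <= A ->
  let mu := 4 / h ^ 2 * (sin (PI * h / (4 * (b - a)))) ^ 2 in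
  let vs := fun x : R =>
    (gamma - A / mu) * cos (PI * (x - a) / (2 * (b - a)))
    - A / mu * sin (PI * (x - a) / (2 * (b - a))) + A / mu in
  solves_problem a b h mu A gamma vs /\
  (forall v : R -> R, solves_problem a b h mu A gamma v ->
     forall x, in_closed_grid a b h x -> v x = vs x) /\
  - Dhp h vs a <= (gamma + (b - a) ^ 2 * A) * (PI / (2 * (b - a))).
Proof.
intros Hh HN HN2 Hg HA mu vs.
assert (HNr : 2 <= INR N) by (apply le_INR in HN2; simpl in HN2; lra).
assert (HL : b - a = INR N * h) by (rewrite <- HN; field; lra).
assert (HLp : 0 < b - a) by nra.
assert (Hpi : 3 < PI <= 4) by (generalize PI2_3_2 PI_4; lra).
set (x0 := PI * h / (4 * (b - a))) in *.
assert (Hx0 : x0 = PI / (4 * INR N)) by (unfold x0; rewrite HL; field; lra).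
assert (Hx0b : 0 < x0 <= PI / 8).
{ rewrite Hx0; split. apply Rdiv_lt_0_compat; lra.
  apply Rmult_le_compat_l; [lra|]. apply Rinv_le_contravar; lra. }
destruct (sinb x0 ltac:(lra) ltac:(lra)) as [SL SU].
set (s := sin x0) in *.
set (co := cos x0) in *.
assert (Hs : x0 - x0^3/6 <= s <= x0) by lra.
assert (Hsp : 0 < s) by nra.
assert (Hco : 0 < co) by (apply cos_gt_0; lra).
assert (Hpy : s^2 + co^2 = 1) by (unfold s, co; rewrite <- (sin2_cos2 x0); unfold Rsqr; ring).
assert (Hphi : forall y t, PI * (y + t * h - a) / (2 * (b - a)) = PI * (y - a) / (2 * (b - a)) + t * (2 * x0)).
{ intros y t; unfold x0; field; lra. }
assert (Heq : forall y, - Dhp h (Dhm h vs) y = mu * vs y - A).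
{ intro y. unfold Dhp, Dhm, vs. replace (y + h - h) with y by ring.
  replace (y + h) with (y + 1 * h) by ring. replace (y - h) with (y + (-1) * h) by ring.
  rewrite !Hphi. replace (-1 * (2 * x0)) with (- (2*x0)) by ring. rewrite !Rmult_1_l.
  rewrite !cos_plus, !sin_plus, cos_neg, sin_neg, cos_2a_sin, sin_2a. fold s co.
  unfold mu. fold s. field. split; lra. }
assert (Hva : vs a = gamma).
{ unfold vs. replace (PI * (a - a) / (2 * (b - a))) with 0 by (field; lra).
  rewrite cos_0, sin_0; ring. }
assert (Hvb : vs b = 0).
{ unfold vs. replace (PI * (b - a) / (2 * (b - a))) with (PI/2) by (field; lra).
  rewrite cos_PI2, sin_PI2; ring. }
assert (Hmu : mu * h^2 = 4 * s^2) by (unfold mu; fold s; field; lra).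
assert (Hmup : 0 < mu) by (unfold mu; fold s; apply Rmult_lt_0_compat; [apply Rdiv_lt_0_compat; nra| nra]).
assert (HNx : INR N * x0 = PI / 4) by (rewrite Hx0; field; lra).
assert (Hb : a + INR N * h = b) by lra.
assert (Hs2 : 0 < sin (2 * x0)) by (apply sin_gt_0; lra).
split; [| split].
- split; [intros x _; apply Heq | split; assumption].
- intros v [Hv [Hva' Hvb']] x [Hxab [z Hz]].
  set (w := fun k : nat => v (a + INR k * h) - vs (a + INR k * h)).
  assert (Hrec : forall k, (S k < N)%nat -> w (S (S k)) = 2 * cos (2 * x0) * w (S k) - w k).
  { intros k Hk. set (y := a + INR (S k) * h).
    assert (Hy : in_open_grid a b h y).
    { split.
      - apply lt_INR in Hk. assert (0 < INR (S k)) by (apply lt_0_INR; lia). unfold y; split; nra.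
      - exists (Z.of_nat (S k)). unfold y. rewrite <- INR_IZR_INZ. reflexivity. }
    assert (E2 : a + INR (S (S k)) * h = y + h) by (unfold y; rewrite (S_INR (S k)); ring).
    assert (E0 : a + INR k * h = y - h) by (unfold y; rewrite (S_INR k); ring).
    unfold w. rewrite E2, E0. fold y.
    generalize (Hv y Hy) (Heq y). unfold Dhp, Dhm. replace (y + h - h) with y by ring.
    intros H1 H2.
    assert (H1' : v (y+h) - 2 * v y + v (y - h) = - h^2 * (mu * v y - A)) by (rewrite <- H1; field; lra).
    assert (H2' : vs (y+h) - 2 * vs y + vs (y - h) = - h^2 * (mu * vs y - A)) by (rewrite <- H2; field; lra).
    assert (H3 : (v (y+h) - vs (y+h)) - 2 * (v y - vs y) + (v (y-h) - vs (y-h)) = - (mu * h^2) * (v y - vs y)) by lra.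
    rewrite Hmu in H3. rewrite cos_2a_sin. fold s. lra. }
  assert (Hw0 : w 0%nat = 0).
  { unfold w. simpl INR. replace (a + 0 * h) with a by ring. rewrite Hva', Hva. ring. }
  assert (Hcl : forall k, (S k <= N)%nat ->
     w k * sin (2 * x0) = w 1%nat * sin (INR k * (2 * x0)) /\
     w (S k) * sin (2 * x0) = w 1%nat * sin (INR (S k) * (2 * x0))).
  { induction k as [|k IH]; intros Hk.
    - split.
      + rewrite Hw0. replace (INR 0 * (2 * x0)) with 0 by (simpl; ring). rewrite sin_0; ring.
      + simpl INR. rewrite Rmult_1_l. ring.
    - destruct (IH ltac:(lia)) as [IH1 IH2]. split; [exact IH2|].
      rewrite (Hrec k ltac:(lia)).
      assert (Ek : INR k * (2 * x0) = INR (S k) * (2 * x0) - 2 * x0) by (rewrite (S_INR k); ring).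
      assert (Ek2 : INR (S (S k)) * (2 * x0) = INR (S k) * (2 * x0) + 2 * x0) by (rewrite (S_INR (S k)); ring).
      rewrite Ek in IH1. rewrite Ek2. rewrite sin_minus in IH1. rewrite sin_plus.
      set (C := cos (2 * x0)) in *. set (S2 := sin (2 * x0)) in *.
      set (U := INR (S k) * (2 * x0)) in *.
      assert (IH2' : C * (w (S k) * S2) = C * (w 1%nat * sin U)) by (rewrite IH2; reflexivity).
      lra. }
  assert (HwN : w N = 0).
  { unfold w. rewrite Hb, Hvb', Hvb. ring. }
  assert (Hw1 : w 1%nat = 0).
  { destruct N as [|N'] ; [lia|]. destruct (Hcl N' ltac:(lia)) as [_ HH].
    replace (INR (S N') * (2 * x0)) with (PI/2) in HH by lra.
    rewrite sin_PI2, HwN in HH. lra. }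
  assert (Hz0 : (0 <= z)%Z).
  { apply le_IZR. assert (0 <= IZR z * h) by lra. 
    destruct (Rle_or_lt 0 (IZR z)) as [|Hn]; [assumption|]. nra. }
  set (k := Z.to_nat z).
  assert (Hzk : IZR z = INR k) by (unfold k; rewrite INR_IZR_INZ, Z2Nat.id; auto).
  assert (HkN : (k <= N)%nat).
  { apply INR_le. assert (IZR z * h <= INR N * h) by lra. 
    destruct (Rle_or_lt (IZR z) (INR N)) as [|Hn]; [lra|]. nra. }
  assert (Hwk : w k * sin (2 * x0) = 0).
  { destruct (Nat.eq_dec k N) as [->|Hne].
    - rewrite HwN; ring.
    - destruct (Hcl k ltac:(lia)) as [HH _]. rewrite HH, Hw1; ring. }
  assert (Hwk0 : w k = 0).
  { destruct (Rmult_integral _ _ Hwk) as [|HH]; [assumption | lra]. }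
  unfold w in Hwk0. rewrite Hz, Hzk. lra.
- unfold Dhp. rewrite Hva.
  assert (Hvh : vs (a+h) = (gamma - A/mu)*(1 - 2*s*s) - A/mu*(2*s*co) + A/mu).
  { unfold vs. replace (PI*(a+h-a)/(2*(b-a))) with (2*x0) by (unfold x0; field; lra).
    rewrite cos_2a_sin, sin_2a; fold s co; ring. }
  assert (HAmu : A/mu = A*h^2/(4*s^2)) by (unfold mu; fold s; field; split; lra).
  assert (HD : - ((vs (a + h) - gamma) / h) = 2*gamma*s^2/h + A*h*((co - s)/(2*s))).
  { rewrite Hvh, HAmu; field; lra. }
  rewrite HD.
  replace (PI/(2*(b-a))) with (2*x0/h) by (unfold x0; field; lra).
  rewrite HL.
  assert (Hkey : 1 <= s * (INR N * PI)).
  { assert (H1: (x0 - x0^3/6) * (INR N * PI) <= s * (INR N * PI)) by (apply Rmult_le_compat_r; nra).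
    assert (H2: (x0 - x0^3/6) * (INR N * PI) = PI*PI/4 * (1 - x0^2/6)).
    { replace ((x0 - x0^3/6) * (INR N * PI)) with ((INR N*x0)*PI*(1-x0^2/6)) by (field).
      rewrite HNx; field. }
    assert (x0 <= 1/2) by lra. assert (Hq : x0^2 <= 1/4) by nra. assert (Hp9 : 9 <= PI*PI) by nra. assert (0 <= (PI*PI - 9) * (1 - x0^2/6 - 23/24)) by (apply Rmult_le_pos; lra). nra. }
  assert (P1 : 2*gamma*s^2/h <= gamma*(2*x0/h)).
  { unfold Rdiv. replace (gamma*(2*x0*/h)) with (2*gamma*x0*/h) by ring.
    apply Rmult_le_compat_r. left; apply Rinv_0_lt_compat; lra. assert (Hsx : s^2 <= x0) by nra. replace (2*gamma*s^2) with ((2*gamma)*s^2) by ring. replace (2*gamma*x0) with ((2*gamma)*x0) by ring. apply Rmult_le_compat_l; lra. }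
  assert (Hc1 : co <= 1) by (unfold co; generalize (COS_bound x0); lra).
  assert (P2 : (co-s)/(2*s) <= INR N*PI/2).
  { apply (Rmult_le_reg_r (2*s)); [lra|].
    replace ((co-s)/(2*s)*(2*s)) with (co-s) by (field; lra). lra. }
  assert (E : (INR N*h)^2*A*(2*x0/h) = A*h*(INR N*PI/2)).
  { replace ((INR N*h)^2*A*(2*x0/h)) with (A*h*INR N*(INR N*x0)*2) by (field; lra).
    rewrite HNx; field. }
  assert (P3 : A*h*((co - s)/(2*s)) <= A*h*(INR N*PI/2)) by (apply Rmult_le_compat_l; nra).
  rewrite Rmult_plus_distr_r, E. lra.
Qed.
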